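(* Fix $\theta=(A,D,\omega)\in(\epsilon,1-\epsilon)^{2p+1}$, $\gamma\in\Gamma$, $k\in\{0,1\}^p$ with $p_k=\sum_jk_j\ge1$, and an ordering $(K_1,\dots,K_{p_k})$ of $\{j:k_j=1\}$. Let $\gamma(0)=\gamma,\gamma(1),\dots,\gamma(p_k)=\gamma'$ be a path of the forward PARNI proposal, i.e. for each $r$, $\gamma(r)\in\{\gamma(r-1),\gamma(r-1)^{(K_r)}\}$. Define the forward proposal probability $q(\gamma,\gamma')=\prod_{r=1}^{p_k}s_{K_r}(\gamma(r-1),\gamma(r))$ and the reverse proposal probability $q'(\gamma',\gamma)=\prod_{r=1}^{p_k}s_{K_{p_k-r+1}}(\gamma(p_k-r+1),\gamma(p_k-r))$ (the reverse move uses the reversed ordering and traverses the same path backwards). Let $Z(r)=Z_{K_r}(\gamma(r-1))$ and $Z'(r)=Z_{K_{p_k-r+1}}(\gamma(p_k-r+1))$. Then $$\frac{\pi(\gamma')\,p^{\mathrm{RN}}_\eta(k\mid\gamma')\,q'(\gamma',\gamma)}{\pi(\gamma)\,p^{\mathrm{RN}}_\eta(k\mid\gamma)\,q(\gamma,\gamma')}=\prod_{r=1}^{p_k}\frac{Z(r)}{Z'(r)},$$ so that the PARNI Metropolis–Hastings acceptance probability equals $\min\{1,\prod_{r=1}^{p_k}Z(r)/Z'(r)\}$.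
   Context: $\Gamma=\{0,1\}^p$; $\pi$ is an everywhere positive probability mass function on $\Gamma$. $g:(0,\infty)\to(0,\infty)$ is continuous and a balancing function: $g(t)=t\,g(1/t)$ for all $t>0$. $\epsilon\in(0,1/2)$, $\eta=(A,D)$. $p^{\mathrm{RN}}_\eta(k\mid\gamma)=\prod_jp_j(k_j\mid\gamma_j)$ with $p_j(1\mid0)=A_j$, $p_j(0\mid0)=1-A_j$, $p_j(1\mid1)=D_j$, $p_j(0\mid1)=1-D_j$. For $x\in\Gamma$ and a coordinate $j$, $x^{(j)}$ denotes $x$ with coordinate $j$ flipped. Define $t_j(x)=\frac{\pi(x^{(j)})\,p_j(1\mid x^{(j)}_j)}{\pi(x)\,p_j(1\mid x_j)}$ (equivalently $\frac{\pi(x^{(j)})p^{\mathrm{RN}}_\eta(e(j)\mid x^{(j)})}{\pi(x)p^{\mathrm{RN}}_\eta(e(j)\mid x)}$ with $e(j)$ the $j$-th standard basis vector), $Z_j(x)=(1-\omega)g(1)+\omega\,g(t_j(x))$, and the one-coordinate step probabilities $s_j(x,x^{(j)})=\omega g(t_j(x))/Z_j(x)$, $s_j(x,x)=(1-\omega)g(1)/Z_j(x)$ (zero for other targets). PARNI proposal: from $\gamma$, draw $k\sim p^{\mathrm{RN}}_\eta(\cdot\mid\gamma)$, order $\{j:k_j=1\}$ as $(K_1,\dots,K_{p_k})$, set $\gamma(0)=\gamma$ and successively draw $\gamma(r)\sim s_{K_r}(\gamma(r-1),\cdot)$; the proposal is $\gamma'=\gamma(p_k)$. *)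

(* Defs.v *)
From HB Require Import structures.
From mathcomp Require Import all_boot all_order all_algebra.
From mathcomp Require Import all_classical all_reals all_analysis.
Set Implicit Arguments. Unset Strict Implicit. Unset Printing Implicit Defensive.
Import Order.TTheory GRing.Theory Num.Theory numFieldNormedType.Exports.
Local Open Scope ring_scope.

Definition Gam (p : nat) := {ffun 'I_p -> bool}.

Definition flip (p : nat) (x : Gam p) (j : 'I_p) : Gam p :=
  [ffun i => if i == j then ~~ x i else x i].

Section Parni.
Variables (R : realType) (p : nat).

(* p_j(c | b) : probability that k_j = c given gamma_j = b *)
Definition pj (A D : 'I_p -> R) (j : 'I_p) (c b : bool) : R :=
  if b then (if c then D j else 1 - D j) else (if c then A j else 1 - A j).

Definition pRN (A D : 'I_p -> R) (k x : Gam p) : R :=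
  \prod_(j < p) pj A D j (k j) (x j).

Definition tj (pi : Gam p -> R) (A D : 'I_p -> R) (j : 'I_p) (x : Gam p) : R :=
  (pi (flip x j) * pj A D j true (flip x j j)) / (pi x * pj A D j true (x j)).

Definition Zj (g : R -> R) (omega : R) (pi : Gam p -> R) (A D : 'I_p -> R)
  (j : 'I_p) (x : Gam p) : R :=
  (1 - omega) * g 1 + omega * g (tj pi A D j x).

Definition sj (g : R -> R) (omega : R) (pi : Gam p -> R) (A D : 'I_p -> R)
  (j : 'I_p) (x y : Gam p) : R :=
  if y == flip x j then omega * g (tj pi A D j x) / Zj g omega pi A D j x
  else if y == x then (1 - omega) * g 1 / Zj g omega pi A D j x
  else 0.

End Parni.

Definition mh_accept (R : realType) (ratio : R) : R := Num.min 1 ratio.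

(* Main.v *)
Require Import Defs.
From HB Require Import structures.
From mathcomp Require Import all_boot all_order all_algebra.
From mathcomp Require Import all_classical all_reals all_analysis.
From mathcomp Require Import ring lra zify.
Import Order.TTheory GRing.Theory Num.Theory numFieldNormedType.Exports.
Local Open Scope ring_scope.

Lemma flip_neq (p : nat) (x : Gam p) j : flip x j != x.
Proof.
apply/eqP => /(congr1 (fun f : Gam p => f j)); rewrite /flip ffunE eqxx.
by case: (x j).
Qed.

Lemma flipK (p : nat) (x : Gam p) j : flip (flip x j) j = x.
Proof.
apply/ffunP => i; rewrite /flip !ffunE; case: eqP => // ->; exact: negbK.
Qed.

Lemma flip_same (p : nat) (x : Gam p) j : flip x j j = ~~ x j.
Proof. by rewrite /flip ffunE eqxx. Qed.

Lemma tele (R : realType) (F : nat -> R) n (a b : 'I_n -> R) :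
  (forall i : 'I_n, F i.+1 * a i = F i * b i) ->
  F n * \prod_(i < n) a i = F 0%N * \prod_(i < n) b i.
Proof.
elim: n a b => [|n IH] a b H; first by rewrite !big_ord0.
rewrite !big_ord_recr /=.
have IH' := IH (fun i => a (widen_ord (leqnSn n) i))
               (fun i => b (widen_ord (leqnSn n) i)) (fun i => H (widen_ord (leqnSn n) i)).
have Hm := H ord_max. simpl in Hm.
transitivity ((F n.+1 * a ord_max) * \prod_(i < n) a (widen_ord (leqnSn n) i)).
  by ring.
rewrite Hm.
transitivity ((F n * \prod_(i < n) a (widen_ord (leqnSn n) i)) * b ord_max).
  by ring.
rewrite IH'; ring.
Qed.

Definition restr (R : realType) p (A D : 'I_p -> R) (k x : Gam p) j :=
  \prod_(i < p | i != j) @pj R p A D i (k i) (x i).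

Lemma pRN_split (R : realType) p (A D : 'I_p -> R) (k x : Gam p) j :
  pRN A D k x = pj A D j (k j) (x j) * restr R p A D k x j.
Proof. by rewrite /pRN (bigD1 j). Qed.

Lemma restr_flip (R : realType) p (A D : 'I_p -> R) (k x : Gam p) j :
  restr R p A D k (flip x j) j = restr R p A D k x j.
Proof. by apply: eq_bigr => i0 hi; rewrite /flip ffunE (negbTE hi). Qed.

Theorem proposition3 (R : realType) (p : nat) (eps : R)
  (pi : Gam p -> R) (g : R -> R) (A D : 'I_p -> R) (omega : R)
  (gamma k : Gam p) (n : nat) (K : 'I_n -> 'I_p) (gam : nat -> Gam p) :
  0 < eps -> eps < 1 / 2 ->
  (forall x, 0 < pi x) -> \sum_(x : Gam p) pi x = 1 ->
  (forall t : R, 0 < t -> 0 < g t) ->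
  (forall t : R, 0 < t -> {for t, continuous g}) ->
  (forall t : R, 0 < t -> g t = t * g (t^-1)) ->
  (forall j, eps < A j < 1 - eps) -> (forall j, eps < D j < 1 - eps) ->
  eps < omega < 1 - eps ->
  (1 <= \sum_(j < p) k j)%N ->
  injective K -> (forall j, k j = (j \in codom K)) ->
  gam 0%N = gamma ->
  (forall r : 'I_n, gam r.+1 = gam r \/ gam r.+1 = flip (gam r) (K r)) ->
  let q := \prod_(r < n) sj g omega pi A D (K r) (gam r) (gam r.+1) in
  let q' := \prod_(r < n)
      sj g omega pi A D (K (rev_ord r)) (gam (n - r)%N) (gam (n - r - 1)%N) in
  let Zr := \prod_(r < n)
      (Zj g omega pi A D (K r) (gam r)
       / Zj g omega pi A D (K (rev_ord r)) (gam (n - r)%N)) in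
  let ratio := (pi (gam n) * pRN A D k (gam n) * q')
               / (pi gamma * pRN A D k gamma * q) in
  ratio = Zr /\ mh_accept ratio = Num.min 1 Zr.
Proof.
move=> e0 e2 pi0 _ g0 _ gbal HA HD Hom _ Kinj Hk g0e Hstep q q' Zr ratio.
have [om0 om1] : 0 < omega /\ omega < 1.
  case/andP: Hom => h1 h2; split; [exact: lt_trans e0 h1|].
  by apply: (lt_le_trans h2); rewrite lerBlDr lerDl ltW.
have pjpos : forall j c b, 0 < pj A D j c b.
  move=> j c b; rewrite /pj; case/andP: (HA j) => a1 a2; case/andP: (HD j) => d1 d2.
  have e1 : eps <= 1 - eps.
    by rewrite lerBrDr -mulr2n -mulr_natr -ler_pdivlMr // ltW // -[1/2]mul1r.
  case: b; case: c.
  - exact: lt_trans e0 d1.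
  - by rewrite subr_gt0; apply: (lt_trans d2); rewrite ltrBlDr ltrDl.
  - exact: lt_trans e0 a1.
  - by rewrite subr_gt0; apply: (lt_trans a2); rewrite ltrBlDr ltrDl.
have pRNpos : forall x, 0 < pRN A D k x.
  by move=> x; rewrite /pRN; apply: prodr_gt0 => j _.
have tpos : forall j x, 0 < tj pi A D j x.
  by move=> j x; rewrite /tj divr_gt0 // mulr_gt0.
have Zpos : forall j x, 0 < Zj g omega pi A D j x.
  move=> j x; rewrite /Zj; apply: addr_gt0; apply: mulr_gt0 => //.
  - by rewrite subr_gt0.
  - exact: g0.
  - exact: g0.
set F := fun m : nat => pi (gam m) * pRN A D k (gam m).
have step : forall i : 'I_n,
  F i.+1 * (sj g omega pi A D (K i) (gam i.+1) (gam i) * Zj g omega pi A D (K i) (gam i.+1))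
  = F i * (sj g omega pi A D (K i) (gam i) (gam i.+1) * Zj g omega pi A D (K i) (gam i)).
  move=> i; rewrite /F; cbv beta; case: (Hstep i) => ->; first by [].
  set x := gam i; set j := K i.
  have Zx := Zpos j x; have Zy := Zpos j (flip x j).
  rewrite /sj flipK !eqxx !divfK ?gt_eqF //.
  have kj : k j = true by rewrite Hk codom_f.
  rewrite !(@pRN_split R p A D k _ j) kj -/x restr_flip.
  set P := restr _ _ _ _ _.
  set a := pi (flip x j) * pj A D j true (flip x j j).
  set b := pi x * pj A D j true (x j).
  have a0 : 0 < a by rewrite mulr_gt0.
  have b0 : 0 < b by rewrite mulr_gt0.
  have ta : tj pi A D j x = a / b by [].
  have tb : tj pi A D j (flip x j) = b / a by rewrite /tj flipK.
  rewrite ta tb (gbal (a / b)) ?divr_gt0 // invf_div.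
  rewrite -/a -/b.
  by rewrite /a /b; field; rewrite !gt_eqF.
have T := @tele R F n (fun i : 'I_n => sj g omega pi A D (K i) (gam i.+1) (gam i) * Zj g omega pi A D (K i) (gam i.+1))
  (fun i : 'I_n => sj g omega pi A D (K i) (gam i) (gam i.+1) * Zj g omega pi A D (K i) (gam i)) step.
rewrite !big_split /= in T.
have Eq' : q' = \prod_(i < n) sj g omega pi A D (K i) (gam i.+1) (gam i).
  rewrite /q' (reindex_inj rev_ord_inj) /=; apply: eq_bigr => r _; rewrite rev_ordK.
  congr (sj _ _ _ _ _ _ (gam _) (gam _)); have := ltn_ord r; rewrite /=; lia.
have EZ : Zr = \prod_(i < n) Zj g omega pi A D (K i) (gam i) /
               \prod_(i < n) Zj g omega pi A D (K i) (gam i.+1).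
  rewrite /Zr prodf_div; congr (_ / _).
  rewrite (reindex_inj rev_ord_inj) /=; apply: eq_bigr => r _; rewrite rev_ordK.
  congr (Zj _ _ _ _ _ _ (gam _)); have := ltn_ord r; rewrite /=; lia.
have spos : forall i : 'I_n, 0 < sj g omega pi A D (K i) (gam i) (gam i.+1).
  move=> i; rewrite /sj; case: (Hstep i) => ->.
    rewrite eq_sym (negbTE (flip_neq _ _ _)) eqxx divr_gt0 // mulr_gt0 ?subr_gt0 //.
    exact: g0.
  by rewrite eqxx divr_gt0 // mulr_gt0 // g0.
have Qpos : 0 < q by apply: prodr_gt0 => i _.
have PZpos : 0 < \prod_(i < n) Zj g omega pi A D (K i) (gam i.+1) by apply: prodr_gt0.
have PZpos' : 0 < \prod_(i < n) Zj g omega pi A D (K i) (gam i) by apply: prodr_gt0.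
have Hratio : ratio = Zr.
  rewrite /ratio Eq' EZ -g0e.
  have n1 : pi (gam 0%N) * pRN A D k (gam 0%N) * q != 0 by rewrite gt_eqF // !mulr_gt0.
  have n2 : \prod_(i < n) Zj g omega pi A D (K i) (gam i.+1) != 0 by rewrite gt_eqF.
  apply/eqP; rewrite (eqr_div _ _ n1 n2); apply/eqP.
  rewrite /F /= in T.
  transitivity (pi (gam n) * pRN A D k (gam n) *
     (\prod_(i < n) sj g omega pi A D (K i) (gam i.+1) (gam i) *
      \prod_(i < n) Zj g omega pi A D (K i) (gam i.+1))); first by ring.
  rewrite T; rewrite /q; ring.
by split; rewrite ?Hratio /mh_accept ?Hratio.
Qed.
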